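(* Consider the saturated Poisson log-linear model with corner-point constraints fitted to an $l^m$ contingency table. Suppose exactly one cell has a zero count, $y_{\mathbf{i}}=0$ for some $\mathbf{i}=(i_1,\dots,i_m)\in L$, and all other counts are positive. Let $e_0=\{j: i_j\neq 0\}$. Then the parameter corresponding to that cell, $\theta^{e_0}_{(i_j)_{j\in e_0}}$ (the intercept $\theta$ if $e_0=\emptyset$), is nonestimable. So is every parameter associated with a higher order interaction given it, i.e. every $\theta^{e}_{\mathbf{k}}$ with $e\supsetneq e_0$, $k_j=i_j$ for $j\in e_0$, and $k_j\in\{1,\dots,l-1\}$ for $j\in e\setminus e_0$.
   Context: Cells of an $l^m$ table are indexed by $\mathbf{i}=(i_1,\dots,i_m)\in L=\{0,1,\dots,l-1\}^m$, so there are $n=l^m$ cells. The counts $y_{\mathbf{i}}$ are observations of independent Poisson variables $Y_{\mathbf{i}}$ with means $\mu_{\mathbf{i}}>0$. Saturated log-linear model with corner-point constraints: for $e\subseteq\{1,\dots,m\}$, $\mathbf{i}_e=(i_j)_{j\in e}$ and $\operatorname{supp}(\mathbf{i})=\{j:i_j\neq 0\}$, $$\log\mu_{\mathbf{i}}=\sum_{e\subseteq \operatorname{supp}(\mathbf{i})}\theta^{e}_{\mathbf{i}_e}.$$ Any parameter involving level $0$ of some variable is set to zero, so the free parameters are $\theta^{e}_{\mathbf{k}}$ with $\mathbf{k}\in\{1,\dots,l-1\}^{e}$. The case $e=\emptyset$ is the intercept $\theta$. There are $p=l^m$ parameters, collected in $\boldsymbol\theta$. Equivalently $\log\boldsymbol\mu=A\boldsymbol\theta$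 for an $n\times p$ 0/1 design matrix $A$. The parameter corresponding to cell $\mathbf{i}$ is the parameter with the largest set of variables in its superscript among those appearing in $\log\mu_{\mathbf{i}}$, namely $\theta^{\operatorname{supp}(\mathbf{i})}_{\mathbf{i}_{\operatorname{supp}(\mathbf{i})}}$. Derivative matrix: the $p\times n$ matrix $D$ with entries $D_{s\mathbf{i}}=\partial (y_{\mathbf{i}}\log\mu_{\mathbf{i}})/\partial\theta_s$, i.e. $D_{s\mathbf{i}}=y_{\mathbf{i}}A_{\mathbf{i}s}$. The model is parameter redundant if $\operatorname{rank}D<p$. A parameter $\theta_s$ is estimable if the $s$-th entry of $\boldsymbol\alpha$ is $0$ for every vector $\boldsymbol\alpha$ with $\boldsymbol\alpha^{\mathsf T}D=\mathbf 0$; otherwise it is nonestimable. *)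

(* Defs.v *)
From HB Require Import structures.
From mathcomp Require Import all_boot all_order all_algebra.
Set Implicit Arguments. Unset Strict Implicit. Unset Printing Implicit Defensive.
Import Order.TTheory GRing.Theory Num.Theory.
Local Open Scope ring_scope.

Definition cell (l m : nat) := {ffun 'I_m -> 'I_l}.

Definition supp (l m : nat) (i : cell l m) : {set 'I_m} :=
  [set j | nat_of_ord (i j) != 0%N].

(* Free parameters theta^e_k, e subset of {1..m}, k in {1..l-1}^e, are
   indexed by the cell s with supp(s) = e and s_e = k (the cell to which the
   parameter corresponds).  This is a bijection; e = supp s, k = s restricted
   to supp s.  The intercept theta corresponds to the all-zero cell. *)
Definition param (l m : nat) := cell l m.

(* Design matrix entry A_{i s}: 1 iff theta^{supp s}_{s_{supp s}} appears in
   log mu_i = sum_{e subset supp(i)} theta^e_{i_e}, i.e. iff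
   supp s \subset supp i and s_j = i_j on supp s. *)
Definition design (R : nzRingType) (l m : nat) (i : cell l m) (s : param l m) : R :=
  if (supp s \subset supp i) && [forall j in supp s, s j == i j] then 1 else 0.

Definition derivD (R : nzRingType) (l m : nat) (y : cell l m -> nat)
    (s : param l m) (i : cell l m) : R :=
  (y i)%:R * design R i s.

Definition nonestimable (R : nzRingType) (l m : nat) (y : cell l m -> nat)
    (s : param l m) : Prop :=
  exists alpha : param l m -> R,
    (forall i : cell l m, \sum_(t : param l m) alpha t * derivD R y t i = 0)
    /\ alpha s != 0.

(* Main.v *)
Require Import Defs.
From HB Require Import structures.
From mathcomp Require Import all_boot all_order all_algebra.
Import Order.TTheory GRing.Theory Num.Theory.
Local Open Scope ring_scope.

Lemma prod_ind (R : realFieldType) (I : finType) (P : pred I) :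
  \prod_(k : I) (if P k then 1 else 0 : R) = if [forall k, P k] then 1 else 0.
Proof.
case: ifP => [/forallP H|/negbT]; first by apply: big1 => k _; rewrite H.
rewrite negb_forall => /existsP [k Hk].
by rewrite (bigD1 k) //= (negbTE Hk) mul0r.
Qed.

Lemma design_prod (R : realFieldType) (l m : nat) (i t : cell l m) :
  design R i t = \prod_(k : 'I_m)
     (if (nat_of_ord (t k) != 0%N) ==> (t k == i k) then 1 else 0 : R).
Proof.
rewrite prod_ind /design; congr (if _ then _ else _).
apply/idP/idP.
- case/andP => /subsetP Hs /forallP Hf; apply/forallP => k; apply/implyP => Hk.
  have Hk' : k \in supp t by rewrite inE.
  by have := Hf k; rewrite Hk'.
- move/forallP => H; apply/andP; split.
  + apply/subsetP => k; rewrite !inE => Hk.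
    by have := H k; rewrite Hk /= => /eqP <-.
  + apply/forallP => k; apply/implyP; rewrite inE => Hk.
    by have := H k; rewrite Hk.
Qed.

Theorem theorem1 (R : realFieldType) (l m : nat) (y : cell l m -> nat)
    (i0 : cell l m)
    (hzero : y i0 = 0%N)
    (hpos : forall i : cell l m, i != i0 -> (0 < y i)%N)
    (s : param l m)
    (hsupp : supp i0 \subset supp s)
    (hagree : forall j : 'I_m, j \in supp i0 -> s j = i0 j) :
  nonestimable R y s.
Proof.
pose a (k : 'I_m) (v : 'I_l) : R :=
  if (nat_of_ord (i0 k) != 0%N) ==> (v == i0 k) then
    (if (nat_of_ord v != 0%N) && (nat_of_ord (i0 k) == 0%N) then -1 else 1)
  else 0.
exists (fun t => \prod_(k : 'I_m) a k (t k)); split; last first.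
  apply/prodf_neq0 => k _; rewrite /a.
  have -> : (nat_of_ord (i0 k) != 0%N) ==> (s k == i0 k).
    apply/implyP => Hk; apply/eqP; apply: hagree; by rewrite inE.
  by case: ifP => _; rewrite ?oppr_eq0 oner_eq0.
move=> i.
under eq_bigr => t _ do rewrite /derivD mulrCA.
rewrite -mulr_sumr.
have [->|Hne] := eqVneq i i0; first by rewrite hzero mul0r.
apply/eqP; rewrite mulf_eq0; apply/orP; right; apply/eqP.
under eq_bigr => t _ do rewrite design_prod -big_split /=.
rewrite -(bigA_distr_bigA (fun k v => a k v *
   (if (nat_of_ord v != 0%N) ==> (v == i k) then 1 else 0 : R))) /=.
have [j Hj] : exists j, i j != i0 j.
  apply/existsP; move: Hne; apply: contraNT; rewrite negb_exists => /forallP H.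
  by apply/eqP/ffunP => k; have := H k; rewrite negbK => /eqP.
rewrite (bigD1 j) //=; apply/eqP; rewrite mulf_eq0; apply/orP; left; apply/eqP.
rewrite /a.
have [Hz|Hnz] := eqVneq (nat_of_ord (i0 j)) 0%N.
- have Hij : nat_of_ord (i j) != 0%N.
    by apply: contra Hj => /eqP H; apply/eqP/val_inj; rewrite /= H Hz.
  rewrite (bigD1 (i0 j)) //= (bigD1 (i j)) /=; last by apply: contraNneq Hj => ->.
  rewrite big1; last first.
    move=> v /andP [Hv1 Hv2].
    have Hv0 : nat_of_ord v != 0%N.
      by apply: contra Hv1 => /eqP H; apply/eqP/val_inj; rewrite /= H Hz.
    by rewrite Hv0 /= (negbTE Hv2) mulr0.
  by rewrite Hz Hij /= eqxx /= !mulr1 addr0 subrr.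
- apply: big1 => v _ /=.
  case: (eqVneq v (i0 j)) => [->|] /=; last by rewrite mul0r.
  by rewrite Hnz /= eq_sym (negbTE Hj) mulr0.
Qed.
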